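(* Let $\mathcal{S} \subseteq 2^{\mathcal{T}_Y}$ be an algebraic closure system which is closed under time shifts. Then there is a theory $\Sigma$ such that $\mathcal{S} = \mathrm{Mod}(\Sigma)$.
   Context: $Y$ is a non-empty finite set of attributes and $\mathcal{T}_Y = \{y^i \mid y \in Y, i \in \mathbb{Z}\}$. For $M \subseteq \mathcal{T}_Y$ and $j \in \mathbb{Z}$, $M + j = \{y^{i+j} \mid y^i \in M\}$. A closure system on $\mathcal{T}_Y$ is a family closed under arbitrary intersections; it induces the closure operator $\mathrm{C}_\mathcal{S}(M) = \bigcap\{N \in \mathcal{S} \mid M \subseteq N\}$. It is algebraic if $\mathrm{C}_\mathcal{S}(M) = \bigcup\{\mathrm{C}_\mathcal{S}(B) \mid B \subseteq M, B \text{ finite}\}$ for all $M$. $\mathcal{S}$ is closed under time shifts if $M+i \in \mathcal{S}$ for all $M \in \mathcal{S}$, $i \in \mathbb{Z}$. A formula is $A \Rightarrow B$ with $A,B$ finite subsets of $\mathcal{T}_Y$; $M \models A \Rightarrow B$ means that for every $i \in \mathbb{Z}$, $A+i \subseteq M$ implies $B+i \subseteq M$. A theory is a set of formulas and $\mathrm{Mod}(\Sigma)$ is the set of all $M \subseteq \mathcal{T}_Y$ in which all formulas of $\Sigma$ are true. *)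

(* Defs.v *)
From Stdlib Require Import List ZArith.
Import ListNotations.
Open Scope Z_scope.

(* Time points y^i are pairs (y, i) : Y * Z; subsets of T_Y are predicates. *)
Definition tpoint (Y : Type) := (Y * Z)%type.
Definition tset (Y : Type) := tpoint Y -> Prop.

Definition finite_type (Y : Type) : Prop := exists l : list Y, forall y, In y l.

Definition subset {Y} (A B : tset Y) : Prop := forall p, A p -> B p.

Definition shift {Y} (M : tset Y) (j : Z) : tset Y :=
  fun p => M (fst p, snd p - j).

Definition fset_of {Y} (l : list (tpoint Y)) : tset Y := fun p => In p l.

Definition is_finite_subset {Y} (B : tset Y) : Prop :=
  exists l : list (tpoint Y), forall p, B p <-> In p l.

Definition big_inter {Y} (F : tset Y -> Prop) : tset Y :=
  fun p => forall N, F N -> N p.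

Definition closure_system {Y} (S : tset Y -> Prop) : Prop :=
  forall F : tset Y -> Prop, (forall N, F N -> S N) -> S (big_inter F).

Definition closure {Y} (S : tset Y -> Prop) (M : tset Y) : tset Y :=
  big_inter (fun N => S N /\ subset M N).

Definition algebraic {Y} (S : tset Y -> Prop) : Prop :=
  forall M : tset Y, forall p,
    closure S M p <->
    exists B : tset Y, subset B M /\ is_finite_subset B /\ closure S B p.

Definition shift_closed {Y} (S : tset Y -> Prop) : Prop :=
  forall M i, S M -> S (shift M i).

Record formula (Y : Type) := Formula { lhs : list (tpoint Y); rhs : list (tpoint Y) }.
Arguments Formula {Y}.
Arguments lhs {Y}.
Arguments rhs {Y}.

Definition models {Y} (M : tset Y) (f : formula Y) : Prop :=
  forall i : Z, subset (shift (fset_of (lhs f)) i) M ->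
                subset (shift (fset_of (rhs f)) i) M.

Definition Mod {Y} (Sigma : formula Y -> Prop) : tset Y -> Prop :=
  fun M => forall f, Sigma f -> models M f.

(* Main.v *)
Require Import Defs.
From Stdlib Require Import List ZArith Lia FunctionalExtensionality PropExtensionality.
Import ListNotations.

Theorem theorem3 (Y : Type) (y0 : Y) (HY : finite_type Y)
  (S : tset Y -> Prop) (Hcs : closure_system S) (Halg : algebraic S)
  (Hsh : shift_closed S) :
  exists Sigma : formula Y -> Prop, forall M : tset Y, S M <-> Mod Sigma M.
Proof.
  exists (fun f => forall N, S N -> models N f).
  intros M; split.
  - intros HM f Hf; apply Hf; exact HM.
  - intros HMod.
    assert (Hcl : S (closure S M)).
    { apply Hcs. intros N [HN _]; exact HN. }
    assert (Heq : closure S M = M).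
    { apply functional_extensionality; intros p.
      apply propositional_extensionality; split.
      + intros Hp. apply Halg in Hp. destruct Hp as [B [HBM [[l Hl] HBp]]].
        assert (Hf : forall N, S N -> models N (Formula l [p])).
        { intros N HN i Hi q Hq. simpl in *.
          unfold Defs.shift, fset_of in Hq. simpl in Hq.
          destruct Hq as [Hq|[]].
          assert (HS : S (Defs.shift N (-i))) by (apply Hsh; exact HN).
          assert (HsubB : subset B (Defs.shift N (-i))).
          { intros r Hr. unfold Defs.shift. apply Hi. unfold Defs.shift, fset_of. simpl.
            apply Hl in Hr. replace (snd r - - i - i) with (snd r) by lia.
            destruct r; exact Hr. }
          specialize (HBp (Defs.shift N (-i)) (conj HS HsubB)).
          unfold Defs.shift in HBp. destruct q as [q1 q2]. simpl in *.
          rewrite Hq in HBp. simpl in HBp.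
          replace (q2 - i - - i) with q2 in HBp by lia. exact HBp. }
        specialize (HMod _ Hf 0%Z).
        assert (H0 : subset (Defs.shift (fset_of (rhs (Formula l [p]))) 0) M).
        { apply HMod. intros r Hr. unfold Defs.shift, fset_of in Hr. simpl in Hr.
          apply HBM. apply Hl. replace (snd r - 0) with (snd r) in Hr by lia.
          destruct r; exact Hr. }
        apply H0. unfold Defs.shift, fset_of. simpl. left.
        destruct p; simpl; f_equal; lia.
      + intros Hp N [_ HN]. apply HN; exact Hp. }
    rewrite <- Heq; exact Hcl.
Qed.
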